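(* In the setting described in the context, for any $n\ge1$, any $1\le k\le n$ and any $\tau\in\mathcal{S}_{n-k}$, the map $P\mapsto L_P$ is constant on $$\mathcal{C}_{n,k}(\tau)=\{P\in\mathcal{C}_{n,k}:\mathcal{I}(\tau)\cap\Delta(P)\neq\emptyset\}.$$
   Context: Standing setup. Let $s,t>0$ with $s+t=1$, and let $\theta\in\mathbb{R}$ with $\inf_{q\in\mathbb{N}}q^{1/s}\|q\theta\|>0$, where $\|x\|$ is the distance from $x$ to the nearest integer. Let $\beta\in(0,1)$, let $A_0$ be a compact interval of length $l>0$, let $R=16\beta^{-4}$, and let $c=\min\{\inf_{q\in\mathbb{N}}q^{1/s}\|q\theta\|,\ \tfrac14 lR^{-1},\ \tfrac18R^{-2-3/t^2}\}$. Rational points are written $P=(p/q,r/q)$ with $q>0$ and $p,q,r$ coprime integers. Let $\mathcal{C}=\{(p/q,r/q)\in\mathbb{Q}^2:|\theta-p/q|<c/q^{1+s}\}$ and $\Delta(P)=\{y\in\mathbb{R}:|y-r/q|<c/q^{1+t}\}$. Non-vertical rational lines are written $L(A,B,C)=\{(x,y):y=(Ax+C)/B\}$ with $A,B,C$ coprime integers, $B>0$. For each $P=(p/q,r/q)\in\mathcal{C}$ fix a line $L_P=L(A_P,B_P,C_P)$ passing through $P$ with $|A_P|\le q^s$ and $B_P\le q^t$ (such a line exists). Let $H_n=4cl^{-1}R^n$ and $\mathcal{C}_n=\{P=(p/q,r/q)\in\mathcal{C}:H_n\le qB_P<H_{n+1}\}$ for $n\ge1$ (these partition $\mathcal{C}$).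 Let $\lambda=3/t^2$, $\mu=1/(t(1+t))$, $\mathcal{C}_{n,1}=\{P\in\mathcal{C}_n:H_{n+1}^{t/(1+t)}R^{-\lambda}\le B_P<H_{n+1}^{t/(1+t)}\}$ and, for $2\le k\le n$, $\mathcal{C}_{n,k}=\{P\in\mathcal{C}_n:H_{n+1}^{t/(1+t)}R^{-\lambda-(k-1)\mu}\le B_P<H_{n+1}^{t/(1+t)}R^{-\lambda-(k-2)\mu}\}$. Let $\mathcal{T}$ be an $[R]$-regular rooted tree with root $\tau_0$ ($[\cdot]$ = integer part), $\mathcal{T}_n$ its vertices of height $n$, and $\tau\prec\tau'$ meaning $\tau'$ is an ancestor of $\tau$ (possibly equal). Fix an injective map $\mathcal{I}$ from $\mathcal{T}$ to closed subintervals of $A_0$ with $|\mathcal{I}(\tau)|=lR^{-n}$ for $\tau\in\mathcal{T}_n$, $\mathcal{I}(\tau)\subset\mathcal{I}(\tau')$ whenever $\tau\prec\tau'$, and such that for each $\tau'$ the intervals $\mathcal{I}(\tau)$ over successors $\tau$ of $\tau'$ have pairwise disjoint interiors and connected union. Define $\mathcal{S}_0=\{\tau_0\}$ and for $n\ge1$, $\mathcal{S}_n=\{\tau:\tau$ is a successor of some vertex in $\mathcal{S}_{n-1}$ and $\mathcal{I}(\tau)\cap\bigcup_{P\in\mathcal{C}_n}\Delta(P)=\emptyset\}$. *)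

(* Defs.v *)
From Stdlib Require Import Reals ZArith List.
Open Scope R_scope.

Definition dist_nearest_int (x : R) : R :=
  Rmin (x - IZR (Int_part x)) (IZR (Int_part x) + 1 - x).

Definition is_inf (E : R -> Prop) (m : R) : Prop :=
  (forall x, E x -> m <= x) /\ (forall b, (forall x, E x -> b <= x) -> b <= m).

Definition dioph_set (s theta : R) (x : R) : Prop :=
  exists q : nat, (1 <= q)%nat /\
    x = Rpower (INR q) (1 / s) * dist_nearest_int (INR q * theta).

Definition Rbig (beta : R) : R := 16 * / beta ^ 4.

Definition cconst (kappa l beta t : R) : R :=
  Rmin kappa (Rmin (/ 4 * l * / Rbig beta)
                   (/ 8 * Rpower (Rbig beta) (-2 - 3 / t ^ 2))).

Definition tree_arity (beta : R) : nat := Z.to_nat (Int_part (Rbig beta)).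

(* Rational point P = (p/q, r/q) represented by the triple (p,q,r). *)
Definition ratpt := (Z * Z * Z)%type.
Definition pt_p (P : ratpt) : Z := fst (fst P).
Definition pt_q (P : ratpt) : Z := snd (fst P).
Definition pt_r (P : ratpt) : Z := snd P.
Definition is_ratpt (P : ratpt) : Prop :=
  (0 < pt_q P)%Z /\ Z.gcd (Z.gcd (pt_p P) (pt_q P)) (pt_r P) = 1%Z.

(* Line L(A,B,C) = {y = (Ax+C)/B} represented by the triple (A,B,C). *)
Definition line := (Z * Z * Z)%type.
Definition ln_A (L : line) : Z := fst (fst L).
Definition ln_B (L : line) : Z := snd (fst L).
Definition ln_C (L : line) : Z := snd L.
Definition is_line (L : line) : Prop :=
  (0 < ln_B L)%Z /\ Z.gcd (Z.gcd (ln_A L) (ln_B L)) (ln_C L) = 1%Z.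
Definition on_line (L : line) (P : ratpt) : Prop :=
  IZR (pt_r P) / IZR (pt_q P) =
  (IZR (ln_A L) * (IZR (pt_p P) / IZR (pt_q P)) + IZR (ln_C L)) / IZR (ln_B L).

Definition inC (s theta c : R) (P : ratpt) : Prop :=
  is_ratpt P /\
  Rabs (theta - IZR (pt_p P) / IZR (pt_q P)) < c / Rpower (IZR (pt_q P)) (1 + s).

Definition inDelta (t c : R) (P : ratpt) (y : R) : Prop :=
  Rabs (y - IZR (pt_r P) / IZR (pt_q P)) < c / Rpower (IZR (pt_q P)) (1 + t).

Definition Hn (c l beta : R) (n : nat) : R := 4 * c * / l * Rbig beta ^ n.

Definition inCn (s theta c l beta : R) (LP : ratpt -> line) (n : nat)
    (P : ratpt) : Prop :=
  inC s theta c P /\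
  Hn c l beta n <= IZR (pt_q P * ln_B (LP P)) < Hn c l beta (S n).

Definition inCnk (s t theta c l beta : R) (LP : ratpt -> line) (n k : nat)
    (P : ratpt) : Prop :=
  let X := Rpower (Hn c l beta (S n)) (t / (1 + t)) in
  let lam := 3 / t ^ 2 in
  let mu := 1 / (t * (1 + t)) in
  let B := IZR (ln_B (LP P)) in
  inCn s theta c l beta LP n P /\
  (if Nat.eqb k 1
   then X * Rpower (Rbig beta) (- lam) <= B < X
   else X * Rpower (Rbig beta) (- lam - INR (k - 1) * mu) <= B
        < X * Rpower (Rbig beta) (- lam - INR (k - 2) * mu)).

(* The [R]-regular rooted tree: vertices are lists of child indices (< m);
   the root is nil, the children of tau are i :: tau (i < m), the height of
   tau is its length, and tau' is an ancestor of tau iff tau = u ++ tau'. *)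
Definition vertex (m : nat) (tau : list nat) : Prop :=
  Forall (fun i => (i < m)%nat) tau.

Definition in_cl (J : R * R) (x : R) : Prop := fst J <= x <= snd J.
Definition in_open (J : R * R) (x : R) : Prop := fst J < x < snd J.

Definition good_tree_map (m : nat) (a0 l Rb : R) (I : list nat -> R * R) : Prop :=
  (forall tau, vertex m tau ->
     a0 <= fst (I tau) /\ snd (I tau) <= a0 + l /\
     snd (I tau) - fst (I tau) = l * / Rb ^ length tau) /\
  (forall tau tau', vertex m tau -> vertex m tau' -> I tau = I tau' -> tau = tau') /\
  (forall tau u, vertex m (u ++ tau) ->
     fst (I tau) <= fst (I (u ++ tau)) /\ snd (I (u ++ tau)) <= snd (I tau)) /\
  (forall tau i j, vertex m tau -> (i < m)%nat -> (j < m)%nat -> i <> j ->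
     forall x, ~ (in_open (I (i :: tau)) x /\ in_open (I (j :: tau)) x)) /\
  (forall tau, vertex m tau ->
     let U := fun x => exists i, (i < m)%nat /\ in_cl (I (i :: tau)) x in
     forall x y z, x <= y <= z -> U x -> U z -> U y).

Fixpoint inS (s t theta c l beta : R) (LP : ratpt -> line)
    (I : list nat -> R * R) (n : nat) (tau : list nat) : Prop :=
  match n with
  | O => tau = nil
  | S n' => exists i tau', tau = i :: tau' /\ (i < tree_arity beta)%nat /\
      inS s t theta c l beta LP I n' tau' /\
      (forall P, inCn s theta c l beta LP (S n') P ->
         forall y, in_cl (I tau) y -> ~ inDelta t c P y)
  end.

(* Main.v *)
Require Import Defs.
From Stdlib Require Import Reals ZArith List Lra Lia Psatz.
Open Scope R_scope.

Lemma prim_eq (a1 b1 c1 a2 b2 c2 : Z) : (0<b1)%Z -> (0<b2)%Z ->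
  Z.gcd (Z.gcd a1 b1) c1 = 1%Z -> Z.gcd (Z.gcd a2 b2) c2 = 1%Z ->
  (a1*b2 = a2*b1)%Z -> (c1*b2 = c2*b1)%Z -> a1=a2 /\ b1=b2 /\ c1=c2.
Proof.
  intros h1 h2 g1 g2 e1 e2.
  assert (E1 : Z.gcd (Z.gcd (a1*b2) (b1*b2)) (c1*b2) = b2).
  { rewrite Z.gcd_mul_mono_r, (Z.abs_eq b2) by lia. rewrite Z.gcd_mul_mono_r, g1. lia. }
  assert (E2 : Z.gcd (Z.gcd (a2*b1) (b2*b1)) (c2*b1) = b1).
  { rewrite Z.gcd_mul_mono_r, (Z.abs_eq b1) by lia. rewrite Z.gcd_mul_mono_r, g2. lia. }
  rewrite e1, e2, (Z.mul_comm b1 b2) in E1. rewrite E1 in E2. subst b2.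
  split; [|split]; auto; eapply Z.mul_reg_r; try eassumption; lia.
Qed.

Lemma Rpower_pos x y : 0 < Rpower x y.
Proof. unfold Rpower; apply exp_pos. Qed.

Lemma ln_le' x y : 0 < x -> x <= y -> ln x <= ln y.
Proof. intros hx [h|h]; [left; apply ln_increasing; lra| subst; lra]. Qed.

Lemma ln_le_inv x y : 0 < x -> 0 < y -> ln x <= ln y -> x <= y.
Proof. intros hx hy h. destruct (Rle_or_lt x y) as [|h']; auto.
  apply ln_increasing in h'; lra. Qed.

Lemma rp_le_1plus x e : 0 < x -> 0 <= e <= 1 -> Rpower x e <= 1 + x.
Proof.
  intros hx he. destruct (Rle_or_lt x 1) as [h|h].
  - assert (Rpower x e <= 1).
    { unfold Rpower. rewrite <- exp_0. destruct (Req_dec x 1).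
      + subst. rewrite ln_1. rewrite Rmult_0_r. lra.
      + assert (ln x < 0). { rewrite <- ln_1. apply ln_increasing; lra. }
        destruct (Rle_lt_or_eq_dec 0 e) as [he'|he']; try lra.
        * left; apply exp_increasing; nra.
        * subst; rewrite Rmult_0_l; lra. }
    lra.
  - assert (Rpower x e <= Rpower x 1) by (apply Rle_Rpower; lra).
    rewrite Rpower_1 in H; lra.
Qed.

Lemma rp_ratio a b e : 0 < a -> 0 < b -> 0 <= e <= 1 ->
  Rpower a e <= (1 + a / b) * Rpower b e.
Proof.
  intros ha hb he.
  assert (a = (a/b) * b) by (field; lra).
  rewrite H at 1. rewrite <- Rpower_mult_distr.
  - apply Rmult_le_compat_r. left; apply Rpower_pos. apply rp_le_1plus; auto.
    apply Rdiv_lt_0_compat; auto.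
  - apply Rdiv_lt_0_compat; auto.
  - auto.
Qed.

Lemma rp_succ q e : 0 < q -> Rpower q (1 + e) = q * Rpower q e.
Proof. intros. rewrite Rpower_plus, Rpower_1; auto. Qed.

Lemma G1 q e a d c : 0 < q -> 0 <= a -> a <= Rpower q e ->
  Rabs d < c / Rpower q (1 + e) -> a * Rabs d <= c / q.
Proof.
  intros hq ha hae hd. rewrite rp_succ in hd; auto.
  pose proof (Rpower_pos q e) as hp.
  assert (a * Rabs d <= Rpower q e * Rabs d) by (apply Rmult_le_compat_r; auto; apply Rabs_pos).
  assert (Rpower q e * Rabs d <= Rpower q e * (c / (q * Rpower q e))).
  { apply Rmult_le_compat_l; lra. }
  assert (Rpower q e * (c / (q * Rpower q e)) = c / q) by (field; lra).
  lra.
Qed.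

Lemma G2 q1 q2 e a d c : 0 < q1 -> 0 < q2 -> 0 <= e <= 1 -> 0 <= c -> 0 <= a ->
  a <= Rpower q1 e -> Rabs d < c / Rpower q2 (1 + e) ->
  q2 * (a * Rabs d) <= c * (1 + q1 / q2).
Proof.
  intros h1 h2 he hc ha hae hd. rewrite rp_succ in hd; auto.
  pose proof (Rpower_pos q2 e) as hp.
  pose proof (rp_ratio q1 q2 e h1 h2 he) as hr.
  assert (a * Rabs d <= Rpower q1 e * Rabs d) by (apply Rmult_le_compat_r; auto; apply Rabs_pos).
  assert (Rpower q1 e * Rabs d <= Rpower q1 e * (c / (q2 * Rpower q2 e))).
  { apply Rmult_le_compat_l; lra. }
  assert (q2 * (Rpower q1 e * (c / (q2 * Rpower q2 e))) = c * (Rpower q1 e / Rpower q2 e)) by (field; lra).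
  assert (Rpower q1 e / Rpower q2 e <= 1 + q1/q2).
  { apply (Rmult_le_reg_r (Rpower q2 e)); auto. unfold Rdiv. rewrite Rmult_assoc, Rinv_l; lra. }
  assert (c * (Rpower q1 e / Rpower q2 e) <= c * (1 + q1/q2)) by (apply Rmult_le_compat_l; auto).
  nra.
Qed.

Lemma abs5 a b c d e : Rabs (a + b - c - d - e) <= Rabs a + Rabs b + Rabs c + Rabs d + Rabs e.
Proof.
  unfold Rminus.
  pose proof (Rabs_triang (a + b + - c + - d) (- e)).
  pose proof (Rabs_triang (a + b + - c) (- d)).
  pose proof (Rabs_triang (a + b) (- c)).
  pose proof (Rabs_triang a b).
  rewrite !Rabs_Ropp in *. lra.
Qed.

Lemma k1_core (A1 B1 C1 x1 y1 q1 x2 y2 q2 th w1 w2 c s t dl Q T : R) :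
  1 <= q1 -> 1 <= q2 -> 0 < B1 -> 0 < s -> 0 < t -> s + t = 1 -> 0 <= c ->
  Rabs A1 <= Rpower q1 s -> B1 <= Rpower q1 t ->
  B1 * y1 = A1 * x1 + C1 ->
  Rabs (th - x1) < c / Rpower q1 (1+s) -> Rabs (th - x2) < c / Rpower q2 (1+s) ->
  Rabs (w1 - y1) < c / Rpower q1 (1+t) -> Rabs (w2 - y2) < c / Rpower q2 (1+t) ->
  Rabs (w2 - w1) <= dl ->
  q1 / q2 <= Q -> q2 / q1 <= Q -> q2 * B1 * dl <= T ->
  Rabs (q2 * (A1 * x2 - B1 * y2 + C1)) <= 2*c + 4*c*Q + T.
Proof.
  intros hq1 hq2 hB hs ht hst hc hA hBq e1 d1 d2 d3 d4 d5 hQ1 hQ2 hT.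
  assert (E : q2 * (A1 * x2 - B1 * y2 + C1) =
    q2 * (A1 * (x2 - th)) + q2 * (A1 * (th - x1)) - q2 * (B1 * (y2 - w2))
    - q2 * (B1 * (w2 - w1)) - q2 * (B1 * (w1 - y1))).
  { assert (C1 = B1 * y1 - A1 * x1) by lra. subst C1. ring. }
  rewrite E. eapply Rle_trans; [apply abs5|].
  rewrite !Rabs_mult. rewrite (Rabs_pos_eq q2) by lra. rewrite (Rabs_pos_eq B1) by lra.
  assert (hA0 := Rabs_pos A1).
  assert (t1 : q2 * (Rabs A1 * Rabs (x2 - th)) <= c * (1 + q1/q2)).
  { rewrite Rabs_minus_sym. apply (G2 q1 q2 s); try lra. }
  assert (t2 : Rabs A1 * Rabs (th - x1) <= c / q1) by (apply (G1 q1 s); lra).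
  assert (t3 : q2 * (B1 * Rabs (y2 - w2)) <= c * (1 + q1/q2)).
  { rewrite Rabs_minus_sym. apply (G2 q1 q2 t); try lra. }
  assert (t5 : B1 * Rabs (w1 - y1) <= c / q1) by (apply (G1 q1 t); lra).
  assert (t4 : B1 * Rabs (w2 - w1) <= B1 * dl) by (apply Rmult_le_compat_l; lra).
  assert (q2 * (Rabs A1 * Rabs (th - x1)) <= c * (q2 / q1)).
  { replace (c * (q2/q1)) with (q2 * (c/q1)) by (field; lra). apply Rmult_le_compat_l; lra. }
  assert (q2 * (B1 * Rabs (w1 - y1)) <= c * (q2 / q1)).
  { replace (c * (q2/q1)) with (q2 * (c/q1)) by (field; lra). apply Rmult_le_compat_l; lra. }
  assert (q2 * (B1 * Rabs (w2 - w1)) <= T).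
  { assert (q2 * (B1 * Rabs (w2 - w1)) <= q2 * (B1 * dl)) by (apply Rmult_le_compat_l; lra).
    replace (q2 * (B1 * dl)) with (q2 * B1 * dl) in H1 by ring. lra. }
  assert (c * (q1/q2) <= c * Q) by (apply Rmult_le_compat_l; lra).
  assert (c * (q2/q1) <= c * Q) by (apply Rmult_le_compat_l; lra).
  nra.
Qed.

Lemma find_level (f : nat -> R) x N : f 1%nat <= x < f (S N) ->
  exists m, (1 <= m <= N)%nat /\ f m <= x < f (S m).
Proof.
  induction N; intros h. lra.
  destruct (Rlt_or_le x (f (S N))) as [h'|h'].
  - destruct IHN as [m [hm hm']]. lra. exists m; split; auto; lia.
  - exists (S N); split; [lia|lra].
Qed.

Lemma inS_len s t theta c l beta LP I N tau :
  inS s t theta c l beta LP I N tau ->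
  length tau = N /\ vertex (tree_arity beta) tau.
Proof.
  revert tau; induction N; simpl; intros tau h.
  - subst; split; auto. constructor.
  - destruct h as [i [tau' [e [hi [h' _]]]]]. subst.
    destruct (IHN _ h'). simpl; split; auto. constructor; auto.
Qed.

Lemma inS_avoid s t theta c l beta LP I a0 N tau :
  good_tree_map (tree_arity beta) a0 l (Rbig beta) I ->
  inS s t theta c l beta LP I N tau ->
  forall m, (1 <= m <= N)%nat -> forall P, inCn s theta c l beta LP m P ->
  forall y, in_cl (I tau) y -> ~ inDelta t c P y.
Proof.
  intros HI. destruct HI as [_ [_ [Hmon _]]].
  revert tau; induction N; simpl; intros tau h m hm. lia.
  destruct h as [i [tau' [e [hi [h' hav]]]]]. subst.
  destruct (Nat.eq_dec m (S N)) as [->|hne]; [exact hav|].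
  intros P hP y hy. apply (IHN tau' h' m ltac:(lia) P hP y).
  destruct (inS_len _ _ _ _ _ _ _ _ _ _ h') as [_ hv].
  destruct (Hmon tau' (i :: nil)) as [m1 m2].
  { simpl. constructor; auto. }
  simpl in m1, m2. unfold in_cl in *. lra.
Qed.


Lemma Rdiv_le_0_compat a b : 0 <= a -> 0 < b -> 0 <= a / b.
Proof. intros. unfold Rdiv. apply Rmult_le_pos; auto. left; apply Rinv_0_lt_compat; auto. Qed.

Lemma Rmult_le_0_r_compat a b : a <= 0 -> 0 <= b -> a * b <= 0.
Proof. intros; nra. Qed.

Lemma E_bound t K0 : 0 < t -> t <= 1 -> 2 <= K0 ->
  K0 + 1 + (2 + (1-t)) * (1/(t*(1+t)))
   - (2 + (1-t) - (1-t)^2) * (3/t^2 + (K0-1)*(1/(t*(1+t)))) <= -3.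
Proof.
  intros ht ht1 hk.
  assert (e1 : (2 + (1-t) - (1-t)^2) * (3/t^2 + (K0-1)*(1/(t*(1+t))))
     = 3*(1+t)*(2-t)/t^2 + (K0-1)*((2-t)/t)) by (field; lra).
  assert (e2 : (2 + (1-t)) * (1/(t*(1+t))) = (3-t)/(t*(1+t))) by (field; lra).
  rewrite e1, e2.
  assert (h1 : (K0-1)*((2-t)/t) >= K0-1).
  { assert ((2-t)/t - 1 >= 0).
    { replace ((2-t)/t - 1) with (2*(1-t)/t) by (field; lra).
      apply Rle_ge, Rdiv_le_0_compat; lra. }
    nra. }
  assert (h2 : 5 + (3-t)/(t*(1+t)) - 3*(1+t)*(2-t)/t^2 <= 0).
  { replace (5 + (3-t)/(t*(1+t)) - 3*(1+t)*(2-t)/t^2)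
      with ((8*t^3+4*t^2-6*t-6)/(t^2*(1+t))) by (field; lra).
    assert (t^3 <= t) by (simpl; nra). assert (t^2 <= t) by (simpl; nra).
    assert (0 < / (t^2*(1+t))) by (apply Rinv_0_lt_compat; apply Rmult_lt_0_compat; [apply pow_lt|]; lra).
    unfold Rdiv. nra. }
  lra.
Qed.

Lemma ln_div' x y : 0 < x -> 0 < y -> ln (x / y) = ln x - ln y.
Proof. intros. unfold Rdiv. rewrite ln_mult, ln_Rinv; try lra. apply Rinv_0_lt_compat; lra. Qed.

Lemma k2_num (R H K0 t c q1 q2 B1 B2 : R) :
  16 < R -> 0 < t -> t <= 1 -> 2 <= K0 -> 0 < c ->
  c <= / 8 * Rpower R (-2 - 3 / t ^ 2) -> 1 < H ->
  let mu := 1/(t*(1+t)) in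
  let Z := Rpower H (t/(1+t)) * Rpower R (- (3/t^2) - (K0-1)*mu) in
  let K := 5 * c * Rpower R (K0+1) / H in
  let M := Rpower q1 (1-t) * B2 + Rpower q2 (1-t) * B1 in
  0 < B1 < Z * Rpower R mu -> 0 < B2 < Z * Rpower R mu ->
  0 < q1 <= H / Z -> 0 < q2 <= H / Z ->
  2*K*B1*B2 < 1 /\ 2*K*B1*B2*Rpower M (1-t) < c /\ K * Rpower M (1+t) < c
  /\ Rpower M (1+t) < H / Rpower R K0.
Proof.
  intros hR ht ht1 hK0 hc hc8 hH mu Z K M hb1 hb2 hq1 hq2.
  set (s := 1 - t).
  assert (hs : 0 <= s) by (unfold s; lra).
  set (rho := ln R). set (h := ln H).
  assert (hrho : ln 16 < rho) by (apply ln_increasing; lra).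
  assert (hl2 : 0 < ln 2) by (rewrite <- ln_1; apply ln_increasing; lra).
  assert (l16 : ln 16 = 4 * ln 2) by (replace 16 with (2^4) by ring; rewrite ln_pow; simpl; lra).
  assert (l20 : ln 20 < 3 * ln 16).
  { replace (3 * ln 16) with (ln (16^3)) by (rewrite ln_pow; simpl; lra; lra).
    apply ln_increasing; lra. }
  assert (l20' : ln 20 = ln 2 + ln 5 + ln 2).
  { rewrite <- !ln_mult; try lra. f_equal; lra. }
  assert (l10 : ln 10 = ln 2 + ln 5) by (rewrite <- ln_mult; try lra; f_equal; lra).
  assert (l8 : ln 8 = 3 * ln 2) by (replace 8 with (2^3) by ring; rewrite ln_pow; simpl; lra).
  assert (l5 : ln 5 < 3 * ln 2).
  { rewrite <- l8. apply ln_increasing; lra. }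
  assert (hh : 0 < h) by (unfold h; rewrite <- ln_1; apply ln_increasing; lra).
  assert (hZ : 0 < Z) by (apply Rmult_lt_0_compat; apply Rpower_pos).
  assert (hmu : 0 < mu) by (unfold mu; apply Rdiv_lt_0_compat; nra).
  set (z := ln Z).
  assert (ez : z = t/(1+t) * h + (- (3/t^2) - (K0-1)*mu) * rho).
  { unfold z, Z. rewrite ln_mult, !ln_Rpower; try apply Rpower_pos. reflexivity. }
  assert (hK : 0 < K).
  { unfold K. apply Rdiv_lt_0_compat; try lra. apply Rmult_lt_0_compat; try apply Rpower_pos; lra. }
  assert (eK : ln K = ln 5 + ln c + (K0+1) * rho - h).
  { unfold K, rho, h. rewrite ln_div', !ln_mult, ln_Rpower; try reflexivity; try lra; try apply Rpower_pos;
    repeat apply Rmult_lt_0_compat; try lra; apply Rpower_pos. }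
  assert (lB1 : ln B1 < z + mu * rho).
  { unfold z, rho. rewrite <- ln_Rpower, <- ln_mult; try apply Rpower_pos; auto. apply ln_increasing; lra. }
  assert (lB2 : ln B2 < z + mu * rho).
  { unfold z, rho. rewrite <- ln_Rpower, <- ln_mult; try apply Rpower_pos; auto. apply ln_increasing; lra. }
  set (W := Rpower (H/Z) s * (Z * Rpower R mu)).
  assert (hW : 0 < W) by (unfold W; repeat apply Rmult_lt_0_compat; auto; apply Rpower_pos).
  assert (eW : ln W = s * (h - z) + z + mu * rho).
  { unfold W. rewrite !ln_mult, !ln_Rpower, ln_div'; try apply Rpower_pos; try lra.
    all: try (unfold h, z, rho; ring).
    all: try (apply Rdiv_lt_0_compat; lra).
    all: try (apply Rmult_lt_0_compat; auto; apply Rpower_pos). }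
  assert (hM : 0 < M) by (unfold M; apply Rplus_lt_0_compat; apply Rmult_lt_0_compat; try apply Rpower_pos; lra).
  assert (hMW : M <= 2 * W).
  { unfold M, W. fold s.
    assert (Rpower q1 s <= Rpower (H/Z) s) by (apply Rle_Rpower_l; lra).
    assert (Rpower q2 s <= Rpower (H/Z) s) by (apply Rle_Rpower_l; lra).
    pose proof (Rpower_pos q1 s). pose proof (Rpower_pos q2 s).
    assert (Rpower q1 s * B2 <= Rpower (H/Z) s * (Z * Rpower R mu)).
    { apply Rmult_le_compat; lra. }
    assert (Rpower q2 s * B1 <= Rpower (H/Z) s * (Z * Rpower R mu)).
    { apply Rmult_le_compat; lra. }
    lra. }
  assert (lM : ln M <= ln 2 + ln W).
  { rewrite <- ln_mult; try lra. apply ln_le'; lra. }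
  clearbody K M W Z.
  assert (idA : (1+t) * (s * (h - z) + z + mu * rho) = h - (2/t + 2 + K0) * rho).
  { rewrite ez. unfold s, mu. field. lra. }
  assert (lM1 : ln (Rpower M (1+t)) <= (1+t) * ln 2 + h - (2/t + 2 + K0) * rho).
  { rewrite ln_Rpower.
    assert ((1+t) * ln M <= (1+t) * (ln 2 + ln W)) by (apply Rmult_le_compat_l; lra).
    rewrite eW in H0. lra. }
  assert (h2t : 2 <= 2/t).
  { apply (Rmult_le_reg_r t); auto. unfold Rdiv. rewrite Rmult_assoc, Rinv_l; lra. }
  split; [|split; [|split]].
  -
    assert (lc : ln c <= - ln 8 + (-2 - 3/t^2) * rho).
    { unfold rho. rewrite <- ln_Rinv, <- ln_Rpower, <- ln_mult; try lra; try apply Rpower_pos.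
      apply ln_le'; lra. }
    assert (id2 : (K0+1) * rho - h + 2 * (z + mu * rho)
      = (2*t/(1+t) - 1) * h + (K0 + 1 - 2*(3/t^2) - 2*(K0-2)*mu) * rho).
    { rewrite ez. unfold mu. field. lra. }
    assert (hmu2 : 1 <= 2 * mu).
    { unfold mu. replace (2 * (1/(t*(1+t)))) with (2/(t*(1+t))) by (field; lra).
      apply (Rmult_le_reg_r (t*(1+t))); try nra. unfold Rdiv. rewrite Rmult_assoc, Rinv_l; nra. }
    assert (h3 : 3 <= 3/t^2).
    { apply (Rmult_le_reg_r (t^2)); try nra. unfold Rdiv. rewrite Rmult_assoc, Rinv_l; nra. }
    assert (hco : (2*t/(1+t) - 1) * h <= 0).
    { replace (2*t/(1+t) - 1) with ((t-1)/(1+t)) by (field; lra).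
      assert (0 < / (1+t)) by (apply Rinv_0_lt_compat; lra).
      assert ((t-1) * / (1+t) <= 0) by nra. unfold Rdiv.
      apply Rmult_le_0_r_compat; lra. }
    assert (2*(K0-2)*mu >= K0 - 2) by nra.
    apply ln_lt_inv; [repeat apply Rmult_lt_0_compat; lra | lra |].
    rewrite ln_1, !ln_mult; try lra; try (repeat apply Rmult_lt_0_compat; lra).
    assert (rho > 0) by lra.
    nra.
  -
    apply ln_lt_inv; try lra.
    + repeat apply Rmult_lt_0_compat; try lra; apply Rpower_pos.
    + rewrite !ln_mult; try lra; try (repeat apply Rmult_lt_0_compat; try lra); try apply Rpower_pos.
      rewrite ln_Rpower. fold s.
      assert (idB : (K0+1) * rho - h + 2 * (z + mu * rho) + s * (s * (h - z) + z + mu * rho)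
        = (K0 + 1 + (2 + (1-t)) * (1/(t*(1+t)))
           - (2 + (1-t) - (1-t)^2) * (3/t^2 + (K0-1)*(1/(t*(1+t))))) * rho).
      { rewrite ez. unfold s, mu. field. lra. }
      pose proof (E_bound t K0 ht ht1 hK0) as hE.
      assert (hEr : (K0 + 1 + (2 + (1-t)) * (1/(t*(1+t)))
           - (2 + (1-t) - (1-t)^2) * (3/t^2 + (K0-1)*(1/(t*(1+t))))) * rho <= -3 * rho).
      { apply Rmult_le_compat_r; lra. }
      assert (hsM : s * ln M <= s * (ln 2 + ln W)) by (apply Rmult_le_compat_l; lra).
      assert (s * ln 2 <= ln 2) by (unfold s; nra).
      rewrite eW in hsM. nra.
  - apply ln_lt_inv; try lra.
    + apply Rmult_lt_0_compat; auto; apply Rpower_pos.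
    + rewrite ln_mult; try lra; try apply Rpower_pos.
      assert ((1+t) * ln 2 <= 2 * ln 2) by nra.
      assert ((2/t + 2 + K0) * rho >= (K0 + 1) * rho + 3 * rho) by nra.
      lra.
  - apply ln_lt_inv; try apply Rpower_pos.
    + apply Rdiv_lt_0_compat; try lra; apply Rpower_pos.
    + rewrite ln_div', (ln_Rpower R K0); try lra; try apply Rpower_pos.
      assert ((1+t) * ln 2 <= 2 * ln 2) by nra.
      assert ((2/t + 2) * rho >= 4 * rho) by nra.
      fold rho h. lra.
Qed.

Lemma e_bound A B C x y q th w w' c s t dl : 1 <= q -> 0 < B -> 0 <= c ->
  Rabs A <= Rpower q s -> B <= Rpower q t -> B * y = A * x + C ->
  Rabs (th - x) < c / Rpower q (1+s) -> Rabs (w' - y) < c / Rpower q (1+t) ->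
  Rabs (w - w') <= dl -> Rabs (A * th - B * w + C) <= 2 * c / q + B * dl.
Proof.
  intros hq hB hc hA hBq e d1 d2 d3.
  replace (A * th - B * w + C) with (A * (th - x) - (B * (w - w') + B * (w' - y))) by (rewrite (Rplus_comm (A*x)) in e; nra).
  eapply Rle_trans; [apply Rabs_triang|]. rewrite Rabs_Ropp.
  eapply Rle_trans; [apply Rplus_le_compat_l; apply Rabs_triang|].
  rewrite !Rabs_mult, (Rabs_pos_eq B) by lra.
  assert (Rabs A * Rabs (th - x) <= c / q) by (apply (G1 q s); try lra; apply Rabs_pos).
  assert (B * Rabs (w' - y) <= c / q) by (apply (G1 q t); try lra).
  assert (B * Rabs (w - w') <= B * dl) by (apply Rmult_le_compat_l; lra).
  assert (2 * c / q = c / q + c / q) by (field; lra). lra.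
Qed.

Lemma inter_x A1 B1 C1 A2 B2 C2 th w e1 e2 D :
  e1 = A1 * th - B1 * w + C1 -> e2 = A2 * th - B2 * w + C2 ->
  D = A1 * B2 - A2 * B1 -> D <> 0 ->
  Rabs (th - (B1 * C2 - C1 * B2) / D) * Rabs D = Rabs (e2 * B1 - e1 * B2).
Proof.
  intros -> -> -> hD. rewrite <- Rabs_mult, <- Rabs_Ropp. f_equal. field. auto.
Qed.

Lemma inter_y A1 B1 C1 A2 B2 C2 th w e1 e2 D :
  e1 = A1 * th - B1 * w + C1 -> e2 = A2 * th - B2 * w + C2 ->
  D = A1 * B2 - A2 * B1 -> D <> 0 ->
  Rabs (w - (A1 * C2 - A2 * C1) / D) * Rabs D = Rabs (A1 * e2 - A2 * e1).
Proof.
  intros -> -> -> hD. rewrite <- Rabs_mult, <- Rabs_Ropp. f_equal. field. auto.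
Qed.

Lemma on_line_eq L P : is_line L -> is_ratpt P -> on_line L P ->
  IZR (ln_B L) * (IZR (pt_r P) / IZR (pt_q P)) =
  IZR (ln_A L) * (IZR (pt_p P) / IZR (pt_q P)) + IZR (ln_C L).
Proof.
  intros [hB _] [hq _] e. unfold on_line in e. rewrite e.
  apply IZR_lt in hB. apply IZR_lt in hq.
  assert (IZR (ln_B L) <> 0) by lra. assert (IZR (pt_q P) <> 0) by lra.
  field. auto.
Qed.

Lemma two_lines L1 L2 P1 P2 : is_line L1 -> is_line L2 -> is_ratpt P1 -> is_ratpt P2 ->
  on_line L1 P1 -> on_line L1 P2 -> on_line L2 P1 -> on_line L2 P2 -> L1 = L2 \/ P1 = P2.
Proof.
  intros hL1 hL2 hP1 hP2 o11 o12 o21 o22.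
  apply on_line_eq in o11, o12, o21, o22; auto.
  destruct hL1 as [hB1 g1], hL2 as [hB2 g2], hP1 as [hq1 g3], hP2 as [hq2 g4].
  destruct L1 as [[A1 B1] C1], L2 as [[A2 B2] C2], P1 as [[p1 q1] r1], P2 as [[p2 q2] r2].
  unfold ln_A, ln_B, ln_C, pt_p, pt_q, pt_r in *; simpl in *.
  pose proof (IZR_lt _ _ hB1) as rB1. pose proof (IZR_lt _ _ hB2) as rB2.
  pose proof (IZR_lt _ _ hq1) as rq1. pose proof (IZR_lt _ _ hq2) as rq2.
  set (x1 := IZR p1 / IZR q1) in *. set (x2 := IZR p2 / IZR q2) in *.
  set (y1 := IZR r1 / IZR q1) in *. set (y2 := IZR r2 / IZR q2) in *.
  destruct (Req_dec x1 x2) as [ex|ex].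
  - right.
    assert (ey : y1 = y2).
    { apply (Rmult_eq_reg_l (IZR B1)); [rewrite o11, o12, ex; reflexivity | lra]. }
    assert (e1 : (p1 * q2 = p2 * q1)%Z).
    { apply eq_IZR. rewrite !mult_IZR. unfold x1, x2 in ex.
      apply (Rmult_eq_reg_r (/ (IZR q1 * IZR q2))).
      - replace (IZR p1 * IZR q2 * / (IZR q1 * IZR q2)) with (IZR p1 / IZR q1) by (field; lra).
        replace (IZR p2 * IZR q1 * / (IZR q1 * IZR q2)) with (IZR p2 / IZR q2) by (field; lra). auto.
      - apply Rinv_neq_0_compat. nra. }
    assert (e2 : (r1 * q2 = r2 * q1)%Z).
    { apply eq_IZR. rewrite !mult_IZR. unfold y1, y2 in ey.
      apply (Rmult_eq_reg_r (/ (IZR q1 * IZR q2))).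
      - replace (IZR r1 * IZR q2 * / (IZR q1 * IZR q2)) with (IZR r1 / IZR q1) by (field; lra).
        replace (IZR r2 * IZR q1 * / (IZR q1 * IZR q2)) with (IZR r2 / IZR q2) by (field; lra). auto.
      - apply Rinv_neq_0_compat. nra. }
    destruct (prim_eq p1 q1 r1 p2 q2 r2 hq1 hq2 g3 g4 e1 e2) as [-> [-> ->]]. reflexivity.
  - left.
    assert (hx : x1 - x2 <> 0) by lra.
    assert (s1 : IZR B1 * (y1 - y2) = IZR A1 * (x1 - x2)) by lra.
    assert (s2 : IZR B2 * (y1 - y2) = IZR A2 * (x1 - x2)) by lra.
    assert (eA : IZR A1 * IZR B2 = IZR A2 * IZR B1).
    { apply (Rmult_eq_reg_r (x1 - x2)); auto.
      transitivity (IZR B1 * IZR B2 * (y1 - y2)); [nra|nra]. }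
    assert (eC : IZR C1 * IZR B2 = IZR C2 * IZR B1).
    { assert (IZR C1 = IZR B1 * y1 - IZR A1 * x1) by lra.
      assert (IZR C2 = IZR B2 * y1 - IZR A2 * x1) by lra.
      rewrite H, H0. transitivity (IZR B1 * IZR B2 * y1 - (IZR A1 * IZR B2) * x1); [ring|].
      rewrite eA. ring. }
    rewrite <- !mult_IZR in eA, eC. apply eq_IZR in eA, eC.
    destruct (prim_eq A1 B1 C1 A2 B2 C2 hB1 hB2 g1 g2 eA eC) as [-> [-> ->]]. reflexivity.
Qed.

Lemma R16 beta : 0 < beta < 1 -> 16 < Rbig beta.
Proof.
  intros hb. unfold Rbig.
  assert (0 < beta ^ 4) by (apply pow_lt; lra).
  assert (beta ^ 4 < 1).
  { replace (beta ^ 4) with ((beta*beta)*(beta*beta)) by ring.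
    assert (0 < beta*beta < 1) by nra. nra. }
  assert (1 < / beta ^ 4).
  { rewrite <- Rinv_1. apply Rinv_lt_contravar; lra. }
  lra.
Qed.

Lemma c_facts kappa l beta t c : 0 < kappa -> 0 < l -> 0 < beta < 1 ->
  c = cconst kappa l beta t ->
  0 < c /\ c <= / 4 * l * / Rbig beta /\ c <= / 8 * Rpower (Rbig beta) (-2 - 3 / t ^ 2).
Proof.
  intros hk hl hb ->. pose proof (R16 beta hb) as hR. unfold cconst.
  split; [|split].
  - apply Rmin_glb_lt; auto. apply Rmin_glb_lt.
    + apply Rmult_lt_0_compat; [lra|]. apply Rinv_0_lt_compat; lra.
    + apply Rmult_lt_0_compat; [lra|apply Rpower_pos].
  - eapply Rle_trans; [apply Rmin_r|apply Rmin_l].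
  - eapply Rle_trans; [apply Rmin_r|apply Rmin_r].
Qed.

Lemma Zge1 (z : Z) : (0 < z)%Z -> 1 <= IZR z.
Proof. intros. apply IZR_le. lia. Qed.

Lemma Zabs_ge1 (z : Z) : z <> 0%Z -> 1 <= Rabs (IZR z).
Proof. intros. rewrite <- abs_IZR. apply IZR_le. lia. Qed.

Lemma Zabs_lt1 (z : Z) : Rabs (IZR z) < 1 -> z = 0%Z.
Proof. intros h. destruct (Z.eq_dec z 0); auto. apply Zabs_ge1 in n. lra. Qed.

Lemma line_ext (L1 L2 : line) : ln_A L1 = ln_A L2 -> ln_B L1 = ln_B L2 -> ln_C L1 = ln_C L2 -> L1 = L2.
Proof. destruct L1 as [[a b] c], L2 as [[a' b'] c']; unfold ln_A, ln_B, ln_C; simpl; intros; subst; auto. Qed.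

Lemma reduce_pt (a d b : Z) : (0 < d)%Z -> exists ka kd kb g, (0 < g)%Z /\ a = (ka*g)%Z /\
  d = (kd*g)%Z /\ b = (kb*g)%Z /\ (0 < kd)%Z /\ Z.gcd (Z.gcd ka kd) kb = 1%Z.
Proof.
  intros hd. set (g := Z.gcd (Z.gcd a d) b).
  assert (hg0 : (0 <= g)%Z) by apply Z.gcd_nonneg.
  assert (hg : (0 < g)%Z).
  { destruct (Z.eq_dec g 0) as [e|e]; [|lia]. unfold g in e.
    apply Z.gcd_eq_0 in e. destruct e as [e _]. apply Z.gcd_eq_0 in e. lia. }
  assert (da : (g | a)%Z) by (apply (Z.divide_trans _ (Z.gcd a d)); [apply Z.gcd_divide_l|apply Z.gcd_divide_l]).
  assert (dd : (g | d)%Z) by (apply (Z.divide_trans _ (Z.gcd a d)); [apply Z.gcd_divide_l|apply Z.gcd_divide_r]).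
  assert (db : (g | b)%Z) by apply Z.gcd_divide_r.
  destruct da as [ka ea], dd as [kd ed], db as [kb eb].
  exists ka, kd, kb, g. repeat split; auto.
  - nia.
  - assert (E : g = (Z.gcd (Z.gcd ka kd) kb * g)%Z).
    { unfold g at 1. rewrite ea, ed, eb at 1.
      rewrite Z.gcd_mul_mono_r, (Z.abs_eq g) by lia. rewrite Z.gcd_mul_mono_r, (Z.abs_eq g) by lia. reflexivity. }
    nia.
Qed.

Lemma Hn_S c l beta m : Hn c l beta (S m) = Hn c l beta m * Rbig beta.
Proof. unfold Hn. simpl. ring. Qed.

Lemma Hn_shift c l beta a b : Hn c l beta (a + b) = Hn c l beta a * Rbig beta ^ b.
Proof. unfold Hn. rewrite pow_add. ring. Qed.

Lemma eK_bound R H c q B dl P : 16 < R -> 0 < H -> 0 < c -> 1 <= q -> 0 < B ->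
  H / R <= q * B -> dl * H = 4 * c * P -> 2 * R <= P ->
  2 * c / q + B * dl <= 5 * c * P / H * B.
Proof.
  intros hR hH hc hq hB hqB hdl hP.
  assert (H <= R * (q * B)).
  { apply (Rmult_le_reg_r (/ R)). apply Rinv_0_lt_compat; lra.
    replace (R * (q * B) * / R) with (q * B) by (field; lra). auto. }
  apply (Rmult_le_reg_r H); auto.
  replace ((2 * c / q + B * dl) * H) with (2 * c * H / q + B * (dl * H)) by (field; lra).
  rewrite hdl.
  replace (5 * c * P / H * B * H) with (5 * c * P * B) by (field; lra).
  assert (2 * c * H / q <= 2 * c * R * B).
  { apply (Rmult_le_reg_r q); try lra. replace (2 * c * H / q * q) with (2 * c * H) by (field; lra).
    nra. }
  assert (0 <= c * B * (P - 2 * R)) by (apply Rmult_le_pos; nra).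
  nra.
Qed.

Lemma k2_case (s t theta c beta a0 l : R) (I : list nat -> R * R) (LP : ratpt -> line)
  (Hs : 0 < s) (Ht : 0 < t) (Hst : s + t = 1) (Hbeta : 0 < beta < 1) (Hl : 0 < l)
  (hc0 : 0 < c) (hc4 : c <= / 4 * l * / Rbig beta)
  (hc8 : c <= / 8 * Rpower (Rbig beta) (-2 - 3 / t ^ 2))
  (HI : good_tree_map (tree_arity beta) a0 l (Rbig beta) I)
  (HLP : forall P, inC s theta c P ->
     is_line (LP P) /\ on_line (LP P) P /\
     Rabs (IZR (ln_A (LP P))) <= Rpower (IZR (pt_q P)) s /\
     IZR (ln_B (LP P)) <= Rpower (IZR (pt_q P)) t)
  (n k : nat) (tau : list nat) (P1 P2 : ratpt) (w1 w2 : R) :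
  (2 <= k <= n)%nat -> inS s t theta c l beta LP I (n - k) tau ->
  inCnk s t theta c l beta LP n k P1 -> in_cl (I tau) w1 -> inDelta t c P1 w1 ->
  inCnk s t theta c l beta LP n k P2 -> in_cl (I tau) w2 -> inDelta t c P2 w2 ->
  LP P1 = LP P2.
Proof.
  intros hk hS h1 hw1 hd1 h2 hw2 hd2.
  pose proof (R16 beta Hbeta) as hR.
  destruct (inS_len _ _ _ _ _ _ _ _ _ _ hS) as [hlen hvert].
  pose proof HI as HI'. destruct HI' as [HI1 _].
  destruct (HI1 tau hvert) as [_ [_ hlenI]]. rewrite hlen in hlenI.
  assert (hdl : Rabs (w2 - w1) <= l * / Rbig beta ^ (n - k)).
  { unfold in_cl in hw1, hw2. rewrite <- hlenI. apply Rabs_le. lra. }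
  assert (ek : Nat.eqb k 1 = false) by (apply Nat.eqb_neq; lia).
  unfold inCnk in h1, h2. cbv zeta in h1, h2. rewrite ek in h1, h2.
  destruct h1 as [[hC1 [hH1a hH1b]] [hb1a hb1b]].
  destruct h2 as [[hC2 [hH2a hH2b]] [hb2a hb2b]].
  destruct (HLP P1 hC1) as [hL1 [ho1 [hA1 hBq1]]].
  destruct (HLP P2 hC2) as [hL2 [ho2 [hA2 hBq2]]].
  pose proof (on_line_eq _ _ hL1 (proj1 hC1) ho1) as e1.
  pose proof (on_line_eq _ _ hL2 (proj1 hC2) ho2) as e2.
  pose proof (Zge1 _ (proj1 (proj1 hC1))) as hq1.
  pose proof (Zge1 _ (proj1 (proj1 hC2))) as hq2.
  pose proof (Zge1 _ (proj1 hL1)) as hB1.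
  pose proof (Zge1 _ (proj1 hL2)) as hB2.
  destruct hC1 as [hP1 hx1]. destruct hC2 as [hP2 hx2].
  unfold inDelta in hd1, hd2.
  rewrite mult_IZR in hH1a, hH1b, hH2a, hH2b.
  destruct (LP P1) as [[A1 B1] C1] eqn:EL1. destruct (LP P2) as [[A2 B2] C2] eqn:EL2.
  unfold ln_A, ln_B, ln_C in hL1, hL2, e1, e2, hA1, hA2, hBq1, hBq2, hB1, hB2, hH1a, hH1b, hH2a, hH2b,
     hb1a, hb1b, hb2a, hb2b.
  cbn [fst snd] in hL1, hL2, e1, e2, hA1, hA2, hBq1, hBq2, hB1, hB2, hH1a, hH1b, hH2a, hH2b,
     hb1a, hb1b, hb2a, hb2b.
  destruct P1 as [[p1 q1] r1]. destruct P2 as [[p2 q2] r2].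
  unfold pt_p, pt_q, pt_r in hP1, hP2, hx1, hx2, hd1, hd2, e1, e2, hq1, hq2, hA1, hA2, hBq1, hBq2,
    hH1a, hH1b, hH2a, hH2b.
  cbn [fst snd] in hP1, hP2, hx1, hx2, hd1, hd2, e1, e2, hq1, hq2, hA1, hA2, hBq1, hBq2,
    hH1a, hH1b, hH2a, hH2b.
  set (R := Rbig beta) in *.
  set (H := Hn c l beta (S n)) in *.
  set (K0 := INR k).
  assert (hHn : Hn c l beta n = H / R).
  { unfold H. rewrite Hn_S. fold R. field. lra. }
  rewrite hHn in hH1a, hH2a.
  assert (hH : 1 < H) by nra.
  assert (es : s = 1 - t) by lra.
  assert (hK0 : 2 <= K0) by (unfold K0; replace 2 with (INR 2) by (simpl; ring); apply le_INR; lia).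
  assert (ek1 : INR (k - 1) = K0 - 1) by (unfold K0; rewrite minus_INR by lia; simpl; ring).
  assert (ek2 : INR (k - 2) = K0 - 2) by (unfold K0; rewrite minus_INR by lia; simpl; ring).
  rewrite ek1 in hb1a, hb2a. rewrite ek2 in hb1b, hb2b.
  set (mu := 1 / (t * (1 + t))) in *.
  set (Z := Rpower H (t / (1 + t)) * Rpower R (- (3 / t ^ 2) - (K0 - 1) * mu)) in *.
  assert (eup : Rpower H (t / (1 + t)) * Rpower R (- (3 / t ^ 2) - (K0 - 2) * mu) = Z * Rpower R mu).
  { unfold Z. rewrite Rmult_assoc, <- Rpower_plus. do 2 f_equal. ring. }
  rewrite eup in hb1b, hb2b.
  assert (hZ : 0 < Z) by (unfold Z; apply Rmult_lt_0_compat; apply Rpower_pos).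
  assert (hqZ1 : IZR q1 <= H / Z).
  { apply (Rmult_le_reg_r Z); auto. replace (H / Z * Z) with H by (field; lra). nra. }
  assert (hqZ2 : IZR q2 <= H / Z).
  { apply (Rmult_le_reg_r Z); auto. replace (H / Z * Z) with H by (field; lra). nra. }
  pose proof (k2_num R H K0 t c (IZR q1) (IZR q2) (IZR B1) (IZR B2) hR Ht ltac:(lra) hK0 hc0 hc8 hH)
    as kn.
  cbv zeta in kn. fold mu Z in kn.
  destruct (kn ltac:(lra) ltac:(lra) ltac:(lra) ltac:(lra)) as [kP [kB [kC kD]]]. clear kn.
  set (K := 5 * c * Rpower R (K0 + 1) / H) in *.
  set (M := Rpower (IZR q1) (1 - t) * IZR B2 + Rpower (IZR q2) (1 - t) * IZR B1) in *.
  set (dl := l * / R ^ (n - k)) in *.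
  assert (hdlH : dl * H = 4 * c * R ^ (k + 1)).
  { unfold dl, H, Hn. replace (S n) with ((n - k) + (k + 1))%nat by lia. rewrite pow_add.
    fold R. field. split; [lra|]. apply pow_nonzero. lra. }
  assert (hP : 2 * R <= R ^ (k + 1)).
  { replace (k + 1)%nat with (S (S (k - 1))) by lia. simpl.
    assert (1 <= R ^ (k - 1)) by (apply pow_R1_Rle; lra). nra. }
  assert (eKP : Rpower R (K0 + 1) = R ^ (k + 1)).
  { rewrite <- Rpower_pow by lra. f_equal. unfold K0. rewrite plus_INR. simpl. ring. }
  assert (hK : 2 * c / IZR q1 + IZR B1 * dl <= K * IZR B1 /\ 2 * c / IZR q2 + IZR B2 * dl <= K * IZR B2).
  { unfold K. rewrite eKP. split; apply (eK_bound R); try lra; auto. }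
  set (e1r := IZR A1 * theta - IZR B1 * w1 + IZR C1).
  set (e2r := IZR A2 * theta - IZR B2 * w1 + IZR C2).
  assert (he1 : Rabs e1r <= K * IZR B1).
  { eapply Rle_trans; [|apply hK].
    apply (e_bound _ _ _ (IZR p1 / IZR q1) (IZR r1 / IZR q1) _ _ _ w1 _ s t); try lra; auto.
    rewrite Rminus_diag, Rabs_R0. unfold dl. apply Rmult_le_pos; try lra.
    left; apply Rinv_0_lt_compat, pow_lt; lra. }
  assert (he2 : Rabs e2r <= K * IZR B2).
  { eapply Rle_trans; [|apply hK].
    apply (e_bound _ _ _ (IZR p2 / IZR q2) (IZR r2 / IZR q2) _ _ _ w2 _ s t); try lra; auto.
    rewrite Rabs_minus_sym. auto. }
  assert (abs2 : forall x y a b, 0 < a -> 0 < b -> Rabs (x * a - y * b) <= Rabs x * a + Rabs y * b).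
  { intros x y a b ha hb. unfold Rminus. eapply Rle_trans; [apply Rabs_triang|].
    rewrite Rabs_Ropp, !Rabs_mult, (Rabs_pos_eq a), (Rabs_pos_eq b); lra. }
  destruct (Z.eq_dec (A1*B2 - A2*B1) 0) as [hD0|hD0].
  -
    destruct (Z.eq_dec (C1*B2) (C2*B1)) as [hCe|hCe].
    + destruct (prim_eq A1 B1 C1 A2 B2 C2 (proj1 hL1) (proj1 hL2) (proj2 hL1) (proj2 hL2)
        ltac:(lia) hCe) as [-> [-> ->]]. reflexivity.
    + exfalso.
      assert (hz : (C1*B2 - C2*B1)%Z <> 0%Z) by lia.
      apply Zabs_ge1 in hz.
      assert (hA : IZR A1 * IZR B2 = IZR A2 * IZR B1) by (rewrite <- !mult_IZR; f_equal; lia).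
      assert (eq : IZR (C1*B2 - C2*B1) = e1r * IZR B2 - e2r * IZR B1).
      { assert (e1r * IZR B2 - e2r * IZR B1 = theta * (IZR A1 * IZR B2 - IZR A2 * IZR B1)
           + (IZR C1 * IZR B2 - IZR C2 * IZR B1)) by (unfold e1r, e2r; ring).
        rewrite H0, hA, minus_IZR, !mult_IZR. ring. }
      rewrite eq in hz.
      pose proof (abs2 e1r e2r (IZR B2) (IZR B1) ltac:(lra) ltac:(lra)).
      assert (Rabs e1r * IZR B2 <= K * IZR B1 * IZR B2) by (apply Rmult_le_compat_r; lra).
      assert (Rabs e2r * IZR B1 <= K * IZR B2 * IZR B1) by (apply Rmult_le_compat_r; lra).
      nra.
  - exfalso.
    assert (hsg : exists sg, (sg = 1 \/ sg = -1)%Z /\ (0 < (A1*B2 - A2*B1) * sg)%Z).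
    { destruct (Z_lt_le_dec 0 (A1*B2 - A2*B1)); [exists 1%Z | exists (-1)%Z]; split; lia. }
    destruct hsg as [sg [hsg hsgp]].
    destruct (reduce_pt ((B1*C2 - C1*B2)*sg) ((A1*B2 - A2*B1)*sg) ((A1*C2 - A2*C1)*sg) hsgp)
      as [ka [kd [kb [g [hg [ea [ed [eb [hkd hgcd]]]]]]]]].
    apply (f_equal IZR) in ea, ed, eb.
    repeat rewrite ?mult_IZR, ?minus_IZR in ea.
    repeat rewrite ?mult_IZR, ?minus_IZR in ed.
    repeat rewrite ?mult_IZR, ?minus_IZR in eb.
    set (Dr := IZR A1 * IZR B2 - IZR A2 * IZR B1) in *.
    assert (hD1 : 1 <= Rabs Dr).
    { unfold Dr. rewrite <- !mult_IZR, <- minus_IZR. apply Zabs_ge1. auto. }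
    assert (hDr : Dr <> 0) by (intro h0; rewrite h0, Rabs_R0 in hD1; lra).
    assert (hsa : Rabs (IZR sg) = 1).
    { destruct hsg as [-> | ->]; [apply Rabs_pos_eq | rewrite Rabs_left]; lra. }
    assert (hsg0 : IZR sg <> 0) by (intro h0; rewrite h0, Rabs_R0 in hsa; lra).
    assert (hgr : 1 <= IZR g) by (apply Zge1; auto).
    assert (hkdr : 1 <= IZR kd) by (apply Zge1; auto).
    assert (exQ : IZR ka / IZR kd = (IZR B1 * IZR C2 - IZR C1 * IZR B2) / Dr).
    { replace (IZR ka / IZR kd) with ((IZR ka * IZR g) / (IZR kd * IZR g)) by (field; lra).
      rewrite <- ea, <- ed. field. auto. }
    assert (eyQ : IZR kb / IZR kd = (IZR A1 * IZR C2 - IZR A2 * IZR C1) / Dr).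
    { replace (IZR kb / IZR kd) with ((IZR kb * IZR g) / (IZR kd * IZR g)) by (field; lra).
      rewrite <- eb, <- ed. field. auto. }
    assert (hqD : IZR kd <= Rabs Dr).
    { replace (Rabs Dr) with (Rabs (Dr * IZR sg)) by (rewrite Rabs_mult, hsa; ring).
      rewrite ed, Rabs_pos_eq by nra. nra. }
    assert (hDM : Rabs Dr <= M).
    { unfold Dr, M. rewrite <- es.
      eapply Rle_trans; [apply abs2; lra|].
      assert (Rabs (IZR A1) * IZR B2 <= Rpower (IZR q1) s * IZR B2) by (apply Rmult_le_compat_r; lra).
      assert (Rabs (IZR A2) * IZR B1 <= Rpower (IZR q2) s * IZR B1) by (apply Rmult_le_compat_r; lra).
      lra. }
    set (qQ := IZR kd) in *.
    assert (hpow : forall e, 0 <= e -> Rpower qQ (1 + e) <= Rabs Dr * Rpower M e).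
    { intros e he. eapply Rle_trans. apply (Rle_Rpower_l qQ (Rabs Dr)); [lra|split; lra].
      rewrite rp_succ by lra. apply Rmult_le_compat_l; [apply Rabs_pos|].
      apply Rle_Rpower_l; lra. }
    assert (lt_div : forall a b c, 0 < b -> a * b < c -> a < c / b).
    { intros a b c0 hb hab. apply (Rmult_lt_reg_r b); auto. unfold Rdiv. rewrite Rmult_assoc, Rinv_l; lra. }
    assert (hxQ : Rabs (theta - IZR ka / qQ) < c / Rpower qQ (1 + s)).
    { apply lt_div; [apply Rpower_pos|].
      rewrite exQ.
      pose proof (inter_x (IZR A1) (IZR B1) (IZR C1) (IZR A2) (IZR B2) (IZR C2) theta w1 e1r e2r Dr
        eq_refl eq_refl eq_refl hDr) as ix.
      pose proof (abs2 e2r e1r (IZR B1) (IZR B2) ltac:(lra) ltac:(lra)).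
      assert (Rabs e2r * IZR B1 <= K * IZR B2 * IZR B1) by (apply Rmult_le_compat_r; lra).
      assert (Rabs e1r * IZR B2 <= K * IZR B1 * IZR B2) by (apply Rmult_le_compat_r; lra).
      set (u := Rabs (theta - (IZR B1 * IZR C2 - IZR C1 * IZR B2) / Dr)) in *.
      assert (hu : 0 <= u) by apply Rabs_pos.
      assert (hp := hpow s ltac:(lra)).
      assert (u * Rpower qQ (1 + s) <= u * (Rabs Dr * Rpower M s)) by (apply Rmult_le_compat_l; lra).
      assert (u * Rabs Dr <= 2 * K * IZR B1 * IZR B2) by lra.
      pose proof (Rpower_pos M s).
      assert (u * Rabs Dr * Rpower M s <= 2 * K * IZR B1 * IZR B2 * Rpower M s)
        by (apply Rmult_le_compat_r; lra).
      rewrite <- es in kB.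
      replace (u * (Rabs Dr * Rpower M s)) with (u * Rabs Dr * Rpower M s) in H4 by ring. lra. }
    assert (hyQ : Rabs (w1 - IZR kb / qQ) < c / Rpower qQ (1 + t)).
    { apply lt_div; [apply Rpower_pos|].
      rewrite eyQ.
      pose proof (inter_y (IZR A1) (IZR B1) (IZR C1) (IZR A2) (IZR B2) (IZR C2) theta w1 e1r e2r Dr
        eq_refl eq_refl eq_refl hDr) as iy.
      assert (hAe : Rabs (IZR A1 * e2r - IZR A2 * e1r) <= K * M).
      { unfold Rminus. eapply Rle_trans; [apply Rabs_triang|]. rewrite Rabs_Ropp, !Rabs_mult.
        unfold M. rewrite <- es.
        assert (Rabs (IZR A1) * Rabs e2r <= Rpower (IZR q1) s * (K * IZR B2)).
        { apply Rmult_le_compat; try apply Rabs_pos; lra. }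
        assert (Rabs (IZR A2) * Rabs e1r <= Rpower (IZR q2) s * (K * IZR B1)).
        { apply Rmult_le_compat; try apply Rabs_pos; lra. }
        lra. }
      set (v := Rabs (w1 - (IZR A1 * IZR C2 - IZR A2 * IZR C1) / Dr)) in *.
      assert (hv : 0 <= v) by apply Rabs_pos.
      assert (hp := hpow t ltac:(lra)).
      assert (v * Rpower qQ (1 + t) <= v * (Rabs Dr * Rpower M t)) by (apply Rmult_le_compat_l; lra).
      pose proof (Rpower_pos M t).
      assert (v * Rabs Dr * Rpower M t <= K * M * Rpower M t) by (apply Rmult_le_compat_r; lra).
      assert (hMp : 0 < M) by lra.
      rewrite (rp_succ M t hMp) in kC.
      replace (v * (Rabs Dr * Rpower M t)) with (v * Rabs Dr * Rpower M t) in H by ring.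
      replace (K * (M * Rpower M t)) with (K * M * Rpower M t) in kC by ring. lra. }
    assert (hQC : inC s theta c (ka, kd, kb)).
    { unfold inC, is_ratpt, pt_p, pt_q, pt_r. cbn [fst snd]. split; [split; [lia|exact hgcd]|exact hxQ]. }
    destruct (HLP _ hQC) as [hLQ [_ [_ hBQ]]].
    pose proof (Zge1 _ (proj1 hLQ)) as hBQ1.
    unfold pt_q in hBQ. cbn [fst snd] in hBQ. fold qQ in hBQ.
    set (BQ := IZR (ln_B (LP (ka, kd, kb)))) in *.
    assert (hx : qQ * BQ < H / Rpower R K0).
    { eapply Rle_lt_trans; [|exact kD].
      eapply Rle_trans. { apply Rmult_le_compat_l; [lra|exact hBQ]. }
      rewrite <- rp_succ by lra. eapply Rle_trans; [apply hpow; lra|].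
      rewrite rp_succ by lra. apply Rmult_le_compat_r; [left; apply Rpower_pos|lra]. }
    assert (hHk : H / Rpower R K0 = Hn c l beta (S (n - k))).
    { unfold K0. rewrite Rpower_pow by lra. unfold H.
      replace (S n) with (S (n - k) + k)%nat by lia. rewrite Hn_shift. fold R. field.
      apply pow_nonzero; lra. }
    assert (hH1 : Hn c l beta 1 <= 1).
    { unfold Hn. simpl. fold R.
      assert (4 * c * / l * (R * 1) <= 4 * (/ 4 * l * / R) * / l * (R * 1)).
      { apply Rmult_le_compat_r; [lra|]. apply Rmult_le_compat_r; [left; apply Rinv_0_lt_compat; lra|lra]. }
      replace (4 * (/ 4 * l * / R) * / l * (R * 1)) with 1 in H0 by (field; lra). lra. }
    destruct (find_level (Hn c l beta) (IZR (pt_q (ka, kd, kb) * ln_B (LP (ka, kd, kb)))) (n - k))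
      as [m [hm hxm]].
    { rewrite mult_IZR. unfold pt_q. cbn [fst snd]. fold qQ BQ. split; [nra|]. rewrite <- hHk. exact hx. }
    apply (inS_avoid _ _ _ _ _ _ _ _ _ _ _ HI hS m hm (ka, kd, kb) (conj hQC hxm) w1 hw1).
    unfold inDelta, pt_r, pt_q. cbn [fst snd]. exact hyQ.
Qed.

Lemma k1_online (s t theta c beta l : R) (LP : ratpt -> line)
  (Hs : 0 < s) (Ht : 0 < t) (Hst : s + t = 1) (Hbeta : 0 < beta < 1) (Hl : 0 < l)
  (hc0 : 0 < c)
  (hc8 : c <= / 8 * Rpower (Rbig beta) (-2 - 3 / t ^ 2))
  (HLP : forall P, inC s theta c P ->
     is_line (LP P) /\ on_line (LP P) P /\
     Rabs (IZR (ln_A (LP P))) <= Rpower (IZR (pt_q P)) s /\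
     IZR (ln_B (LP P)) <= Rpower (IZR (pt_q P)) t)
  (n : nat) (P1 P2 : ratpt) (w1 w2 : R) :
  (1 <= n)%nat ->
  inCnk s t theta c l beta LP n 1 P1 -> inDelta t c P1 w1 ->
  inCnk s t theta c l beta LP n 1 P2 -> inDelta t c P2 w2 ->
  Rabs (w2 - w1) <= l * / Rbig beta ^ (n - 1) ->
  on_line (LP P1) P2.
Proof.
  intros hn h1 hd1 h2 hd2 hdl.
  pose proof (R16 beta Hbeta) as hR.
  unfold inCnk in h1, h2. cbv zeta in h1, h2. simpl Nat.eqb in h1, h2. cbv iota in h1, h2.
  destruct h1 as [[hC1 [hH1a hH1b]] [hb1a hb1b]].
  destruct h2 as [[hC2 [hH2a hH2b]] [hb2a hb2b]].
  destruct (HLP P1 hC1) as [hL1 [ho1 [hA1 hBq1]]].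
  destruct (HLP P2 hC2) as [hL2 [ho2 [hA2 hBq2]]].
  pose proof (on_line_eq _ _ hL1 (proj1 hC1) ho1) as e1.
  pose proof (Zge1 _ (proj1 (proj1 hC1))) as hq1.
  pose proof (Zge1 _ (proj1 (proj1 hC2))) as hq2.
  pose proof (Zge1 _ (proj1 hL1)) as hB1.
  pose proof (Zge1 _ (proj1 hL2)) as hB2.
  destruct hC1 as [hP1 hx1]. destruct hC2 as [hP2 hx2].
  unfold inDelta in hd1, hd2.
  rewrite mult_IZR in hH1a, hH1b, hH2a, hH2b.
  destruct (LP P1) as [[A1 B1] C1] eqn:EL1.
  unfold ln_A, ln_B, ln_C in hL1, e1, hA1, hBq1, hB1, hH1a, hH1b, hb1a, hb1b.
  cbn [fst snd] in hL1, e1, hA1, hBq1, hB1, hH1a, hH1b, hb1a, hb1b.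
  set (B2 := IZR (ln_B (LP P2))) in *.
  destruct P1 as [[p1 q1] r1]. destruct P2 as [[p2 q2] r2].
  unfold pt_p, pt_q, pt_r in hP1, hP2, hx1, hx2, hd1, hd2, e1, hq1, hq2, hA1, hBq1, hBq2,
    hH1a, hH1b, hH2a, hH2b.
  cbn [fst snd] in hP1, hP2, hx1, hx2, hd1, hd2, e1, hq1, hq2, hA1, hBq1, hBq2,
    hH1a, hH1b, hH2a, hH2b.
  set (R := Rbig beta) in *.
  set (H := Hn c l beta (S n)) in *.
  assert (hHn : Hn c l beta n = H / R).
  { unfold H. rewrite Hn_S. fold R. field. lra. }
  rewrite hHn in hH1a, hH2a.
  set (r := Rpower R (3 / t ^ 2)) in *.
  assert (hr : 1 <= r).
  { unfold r. rewrite <- (Rpower_O R) by lra. apply Rle_Rpower; [lra|].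
    apply Rdiv_le_0_compat; [lra|apply pow_lt; lra]. }
  rewrite Rpower_Ropp in hb1a, hb2a. fold r in hb1a, hb2a.
  set (X := Rpower H (t / (1 + t))) in *.
  assert (hX1 : X <= r * IZR B1).
  { apply (Rmult_le_reg_r (/ r)). apply Rinv_0_lt_compat; lra.
    replace (r * IZR B1 * / r) with (IZR B1) by (field; lra). lra. }
  assert (hX2 : X <= r * B2).
  { apply (Rmult_le_reg_r (/ r)). apply Rinv_0_lt_compat; lra.
    replace (r * B2 * / r) with B2 by (field; lra). lra. }
  assert (hHR1 : H <= R * (IZR q1 * IZR B1)).
  { apply (Rmult_le_reg_r (/ R)). apply Rinv_0_lt_compat; lra.
    replace (R * (IZR q1 * IZR B1) * / R) with (IZR q1 * IZR B1) by (field; lra). lra. }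
  assert (hHR2 : H <= R * (IZR q2 * B2)).
  { apply (Rmult_le_reg_r (/ R)). apply Rinv_0_lt_compat; lra.
    replace (R * (IZR q2 * B2) * / R) with (IZR q2 * B2) by (field; lra). lra. }
  assert (hQ1 : IZR q1 / IZR q2 <= R * r).
  { apply (Rmult_le_reg_r (IZR q2)); [lra|]. replace (IZR q1 / IZR q2 * IZR q2) with (IZR q1) by (field; lra).
    (* q1 B1 < H <= R q2 B2 < R q2 r B1 *)
    assert (IZR q1 * IZR B1 < R * r * IZR q2 * IZR B1).
    { assert (R * (IZR q2 * B2) <= R * (IZR q2 * (r * IZR B1))).
      { apply Rmult_le_compat_l; [lra|]. apply Rmult_le_compat_l; lra. }
      lra. }
    nra. }
  assert (hQ2 : IZR q2 / IZR q1 <= R * r).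
  { apply (Rmult_le_reg_r (IZR q1)); [lra|]. replace (IZR q2 / IZR q1 * IZR q1) with (IZR q2) by (field; lra).
    assert (IZR q2 * B2 < R * r * IZR q1 * B2).
    { assert (R * (IZR q1 * IZR B1) <= R * (IZR q1 * (r * B2))).
      { apply Rmult_le_compat_l; [lra|]. apply Rmult_le_compat_l; lra. }
      lra. }
    nra. }
  set (dl := l * / R ^ (n - 1)) in *.
  assert (hdlH : dl * H = 4 * c * R ^ 2).
  { unfold dl, H, Hn. replace (S n) with ((n - 1) + 2)%nat by lia. rewrite pow_add.
    fold R. field. split; [lra|]. apply pow_nonzero. lra. }
  assert (hdl0 : 0 <= dl).
  { unfold dl. apply Rmult_le_pos; [lra|]. left; apply Rinv_0_lt_compat, pow_lt; lra. }
  assert (hT : IZR q2 * IZR B1 * dl <= 4 * c * R ^ 2 * r).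
  { assert (IZR q2 * IZR B1 <= r * H).
    { assert (IZR q2 * IZR B1 <= IZR q2 * (r * B2)) by (apply Rmult_le_compat_l; lra). nra. }
    rewrite <- hdlH.
    assert (IZR q2 * IZR B1 * dl <= r * H * dl) by (apply Rmult_le_compat_r; lra).
    lra. }
  assert (hcR : c * (R ^ 2 * r) <= / 8).
  { assert (Rpower R (-2 - 3 / t ^ 2) * (R ^ 2 * r) = 1).
    { unfold r. rewrite <- (Rpower_pow 2 R) by lra. rewrite <- !Rpower_plus.
      replace (-2 - 3 / t ^ 2 + (INR 2 + 3 / t ^ 2)) with 0 by (simpl; ring). apply Rpower_O; lra. }
    assert (0 < R ^ 2 * r) by (apply Rmult_lt_0_compat; [apply pow_lt|]; lra).
    assert (c * (R ^ 2 * r) <= / 8 * Rpower R (-2 - 3 / t ^ 2) * (R ^ 2 * r)) by (apply Rmult_le_compat_r; lra).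
    lra. }
  pose proof (k1_core (IZR A1) (IZR B1) (IZR C1) (IZR p1 / IZR q1) (IZR r1 / IZR q1) (IZR q1)
    (IZR p2 / IZR q2) (IZR r2 / IZR q2) (IZR q2) theta w1 w2 c s t dl (R * r) (4 * c * R ^ 2 * r)
    hq1 hq2 ltac:(lra) Hs Ht Hst ltac:(lra) hA1 hBq1 e1 hx1 hx2 hd1 hd2 hdl hQ1 hQ2 hT) as hk.
  assert (hlt : 2 * c + 4 * c * (R * r) + 4 * c * R ^ 2 * r < 1).
  { assert (R ^ 2 = R * R) by (simpl; ring).
    assert (c * (R * r) * 16 <= c * (R ^ 2 * r)).
    { rewrite H0. assert (0 <= c * R * r) by (apply Rmult_le_pos; [apply Rmult_le_pos|]; lra). nra. }
    assert (c <= c * (R * r)).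
    { assert (1 <= R * r) by nra. nra. }
    nra. }
  set (N := (A1 * p2 - B1 * r2 + C1 * q2)%Z).
  assert (eN : IZR N = IZR q2 * (IZR A1 * (IZR p2 / IZR q2) - IZR B1 * (IZR r2 / IZR q2) + IZR C1)).
  { unfold N. rewrite plus_IZR, minus_IZR, !mult_IZR. field. lra. }
  assert (hN : N = 0%Z) by (apply Zabs_lt1; rewrite eN; lra).
  unfold on_line, ln_A, ln_B, ln_C, pt_p, pt_q, pt_r. cbn [fst snd].
  assert (hN' : IZR A1 * IZR p2 - IZR B1 * IZR r2 + IZR C1 * IZR q2 = 0).
  { rewrite <- !mult_IZR, <- minus_IZR, <- plus_IZR. fold N. rewrite hN. reflexivity. }
  assert (hBr : IZR B1 * IZR r2 = IZR A1 * IZR p2 + IZR C1 * IZR q2) by lra.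
  transitivity ((IZR B1 * IZR r2) / (IZR B1 * IZR q2)); [field; lra|].
  rewrite hBr. field. lra.
Qed.

Theorem lemma4p2
  (s t theta kappa beta a0 l c : R) (I : list nat -> R * R) (LP : ratpt -> line)
  (Hs : 0 < s) (Ht : 0 < t) (Hst : s + t = 1)
  (Hkappa : is_inf (dioph_set s theta) kappa) (Hkpos : 0 < kappa)
  (Hbeta : 0 < beta < 1) (Hl : 0 < l)
  (Hc : c = cconst kappa l beta t)
  (HI : good_tree_map (tree_arity beta) a0 l (Rbig beta) I)
  (HLP : forall P, inC s theta c P ->
     is_line (LP P) /\ on_line (LP P) P /\
     Rabs (IZR (ln_A (LP P))) <= Rpower (IZR (pt_q P)) s /\
     IZR (ln_B (LP P)) <= Rpower (IZR (pt_q P)) t) :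
  forall (n k : nat) (tau : list nat),
    (1 <= n)%nat -> (1 <= k <= n)%nat ->
    inS s t theta c l beta LP I (n - k) tau ->
    forall P P' : ratpt,
      inCnk s t theta c l beta LP n k P ->
      (exists y, in_cl (I tau) y /\ inDelta t c P y) ->
      inCnk s t theta c l beta LP n k P' ->
      (exists y, in_cl (I tau) y /\ inDelta t c P' y) ->
      LP P = LP P'.
Proof.
  intros n k tau hn hk hS P P' hP [w1 [hw1 hd1]] hP' [w2 [hw2 hd2]].
  destruct (c_facts kappa l beta t c Hkpos Hl Hbeta Hc) as [hc0 [hc4 hc8]].
  destruct (Nat.eq_dec k 1) as [->|hk1].
  - destruct (inS_len _ _ _ _ _ _ _ _ _ _ hS) as [hlen hvert].
    pose proof HI as HI'. destruct HI' as [HI1 _].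
    destruct (HI1 tau hvert) as [_ [_ hlenI]]. rewrite hlen in hlenI.
    assert (hdl : Rabs (w2 - w1) <= l * / Rbig beta ^ (n - 1)).
    { unfold in_cl in hw1, hw2. rewrite <- hlenI. apply Rabs_le. lra. }
    pose proof (k1_online s t theta c beta l LP Hs Ht Hst Hbeta Hl hc0 hc8 HLP n P P' w1 w2
      hn hP hd1 hP' hd2 hdl) as o12.
    pose proof (k1_online s t theta c beta l LP Hs Ht Hst Hbeta Hl hc0 hc8 HLP n P' P w2 w1
      hn hP' hd2 hP hd1 ltac:(rewrite Rabs_minus_sym; exact hdl)) as o21.
    destruct hP as [[hC _] _]. destruct hP' as [[hC' _] _].
    destruct (HLP P hC) as [hL [ho _]]. destruct (HLP P' hC') as [hL' [ho' _]].
    destruct (two_lines (LP P) (LP P') P P' hL hL' (proj1 hC) (proj1 hC') ho o12 o21 ho')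
      as [e|e]; [exact e| subst; reflexivity].
  - apply (k2_case s t theta c beta a0 l I LP Hs Ht Hst Hbeta Hl hc0 hc4 hc8 HI HLP n k tau P P' w1 w2);
      auto; lia.
Qed.
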